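(* If $P$ is the Petersen graph, then $\operatorname{H}(P)=6$.
   Context: All graphs are finite, simple and undirected. In hopping forcing each vertex is colored blue or white, and initially a set $B\subseteq V(G)$ is blue. The hopping color change rule: a blue vertex $v$ may force a white vertex $w$ to become blue if $v$ has not previously performed a force and every neighbor of $v$ is blue. A chronological list of forces of $B$ is a sequence of such forces applied one at a time starting from $B$ until no further force is possible. $B$ is a hopping forcing set if some chronological list of forces of $B$ turns every vertex blue. $\operatorname{H}(G)$ is the minimum size of a hopping forcing set of $G$. *)

(* Defs.v *)
From mathcomp Require Import all_boot.
Set Implicit Arguments. Unset Strict Implicit. Unset Printing Implicit Defensive.

(* A simple graph on a finite vertex type T is given by an adjacency
   relation [e] (symmetric and irreflexive). *)

(* The state of the process is the pair (B, F) where B is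
   the current set of blue vertices and F the set of vertices that have
   already performed a force.  [hop_reach e B F B'] means: starting from the
   state (B, F), some finite chronological sequence of hopping forces yields
   the blue set B'. *)
Inductive hop_reach (T : finType) (e : rel T) :
  {set T} -> {set T} -> {set T} -> Prop :=
| hop_done (B F : {set T}) : hop_reach e B F B
| hop_force (B F B' : {set T}) (v w : T) :
    v \in B -> v \notin F -> (forall u, e v u -> u \in B) -> w \notin B ->
    hop_reach e (w |: B) (v |: F) B' -> hop_reach e B F B'.

(* B is a hopping forcing set: some chronological list of forces starting
   from B (with no vertex having forced yet) turns every vertex blue.  (Once
   every vertex is blue no further force is possible, so such a list is
   complete.) *)
Definition hopping_forcing_set (T : finType) (e : rel T) (B : {set T}) : Prop :=
  hop_reach e B set0 [set: T].

Definition hopping_number (T : finType) (e : rel T) (k : nat) : Prop :=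
  (exists B : {set T}, hopping_forcing_set e B /\ #|B| = k) /\
  (forall B : {set T}, hopping_forcing_set e B -> k <= #|B|).

(* The Petersen graph, as the Kneser graph K(5,2): vertices are the
   2-element subsets of {0,...,4}, adjacent iff disjoint. *)
Definition petersen_vertex := {A : {set 'I_5} | #|A| == 2}.

Definition petersen_adj : rel petersen_vertex :=
  fun A B => [disjoint (val A) & (val B)].

(* Main.v *)
Require Import Defs.
From mathcomp Require Import all_boot.
Set Implicit Arguments. Unset Strict Implicit. Unset Printing Implicit Defensive.

Definition pr (i : nat) : nat * nat :=
  match i with
  | 1 => (0,2) | 2 => (0,3) | 3 => (0,4) | 4 => (1,2) | 5 => (1,3)
  | 6 => (1,4) | 7 => (2,3) | 8 => (2,4) | 9 => (3,4) | _ => (0,1) end.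
Definition pa i := (pr i).1.
Definition pb i := (pr i).2.

Lemma pr_ok i : [&& pa i < 5, pb i < 5 & pa i != pb i].
Proof. by do 10?[case: i => [|i]]. Qed.

Definition o5 (n : nat) : 'I_5 := inord n.
Lemma o5_eq k a : k < 5 -> a < 5 -> (o5 k == o5 a) = (k == a).
Proof.
move=> hk ha; apply/eqP/eqP => [/(congr1 val)|->//].
by rewrite /o5 /= !inordK.
Qed.

Definition pset i : {set 'I_5} := [set o5 (pa i); o5 (pb i)].
Lemma pset_card i : #|pset i| == 2.
Proof.
case/and3P: (pr_ok i) => h1 h2 h3.
by rewrite /pset cards2 o5_eq // h3.
Qed.

Definition fv (i : nat) : petersen_vertex := exist _ (pset i) (pset_card i).

Definition mv a b := map (fun k => (k == a) || (k == b)) (iota 0 5).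
Definition sigset (A : {set 'I_5}) := map (fun k => o5 k \in A) (iota 0 5).

Lemma sigset_inj A A' : sigset A = sigset A' -> A = A'.
Proof.
move=> H; apply/setP => z.
have := congr1 (fun s => nth false s z) H.
by rewrite /= !(nth_map 0) ?size_iota ?ltn_ord // nth_iota ?ltn_ord // add0n /o5 inord_val.
Qed.

Lemma sigset2 a b : a < 5 -> b < 5 -> sigset [set o5 a; o5 b] = mv a b.
Proof.
move=> ha hb; apply/eq_in_map => k; rewrite mem_iota => /andP [_ hk].
by rewrite in_set2 !o5_eq.
Qed.

Lemma sigset_pset i : sigset (pset i) = mv (pa i) (pb i).
Proof. by case/and3P: (pr_ok i) => h1 h2 _; rewrite sigset2. Qed.

Lemma inj_check : all (fun i => all (fun j =>
   (mv (pa i) (pb i) == mv (pa j) (pb j)) ==> (i == j)) (iota 0 10)) (iota 0 10).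
Proof. by []. Qed.

Lemma fv_inj i j : i < 10 -> j < 10 -> fv i = fv j -> i = j.
Proof.
move=> hi hj /(congr1 val) /= /(congr1 sigset); rewrite !sigset_pset => E.
have /allP/(_ i) := inj_check; rewrite mem_iota hi => /(_ isT) /allP /(_ j).
by rewrite mem_iota hj E eqxx => /(_ isT) /eqP.
Qed.

Lemma surj_check : all (fun a => all (fun b => (a != b) ==>
   has (fun i => mv (pa i) (pb i) == mv a b) (iota 0 10)) (iota 0 5)) (iota 0 5).
Proof. by []. Qed.

Lemma fv_surj x : exists2 i, i < 10 & fv i = x.
Proof.
case: x => A HA.
case/cards2P: HA (HA) => a [b [ab ->]] HA.
have /allP/(_ a) := surj_check; rewrite mem_iota ltn_ord => /(_ isT) /allP /(_ b).
rewrite mem_iota ltn_ord val_eqE ab => /(_ isT) /hasP [i]; rewrite mem_iota => /andP [_ hi] /eqP E.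
exists i => //; apply: val_inj => /=.
apply: sigset_inj; rewrite sigset_pset E -sigset2 ?ltn_ord //.
by rewrite /o5 !inord_val.
Qed.

Definition adjN i j := [&& pa i != pa j, pa i != pb j, pb i != pa j & pb i != pb j].

Lemma adj_fv i j : petersen_adj (fv i) (fv j) = adjN i j.
Proof.
case/and3P: (pr_ok i) => h1 h2 _; case/and3P: (pr_ok j) => h3 h4 _.
rewrite /petersen_adj /= /pset disjoints_subset subUset !sub1set !inE !o5_eq //.
by rewrite /adjN; case: (pa i == pa j); case: (pa i == pb j); case: (pb i == pa j); case: (pb i == pb j).
Qed.

Definition adjL v := filter (adjN v) (iota 0 10).

Fixpoint reachN (n : nat) (b fl : seq bool) : bool :=
  match n with
  | 0 => all id b
  | n'.+1 => if all id b then true else has (fun v =>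
        if nth false b v then if ~~ nth false fl v then
        if all (fun u => nth false b u) (adjL v) then
        has (fun w => if ~~ nth false b w then
              reachN n' (set_nth false b w true) (set_nth false fl v true) else false) (iota 0 10)
        else false else false else false)
        (iota 0 10)
  end.

Definition code (B : {set petersen_vertex}) := map (fun i => fv i \in B) (iota 0 10).

Lemma reachN0 b fl : reachN 0 b fl = all id b. Proof. by []. Qed.
Lemma reachNS n b fl : reachN n.+1 b fl = all id b || has (fun v => [&& nth false b v, ~~ nth false fl v,
        all (fun u => nth false b u) (adjL v) &
        has (fun w => ~~ nth false b w &&
              reachN n (set_nth false b w true) (set_nth false fl v true)) (iota 0 10)])
        (iota 0 10).
Proof. by []. Qed.

Lemma size_code B : size (code B) = 10.
Proof. by rewrite size_map size_iota. Qed.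

Lemma nth_code B i : nth false (code B) i = (i < 10) && (fv i \in B).
Proof.
case: (ltnP i 10) => hi.
  by rewrite (nth_map 0) ?size_iota // nth_iota.
by rewrite nth_default // size_code.
Qed.

Lemma code_U B j : j < 10 -> code (fv j |: B) = set_nth false (code B) j true.
Proof.
move=> hj; apply: (@eq_from_nth _ false).
  by rewrite size_set_nth !size_code; apply/esym/maxn_idPr.
move=> i; rewrite size_code => hi.
rewrite nth_set_nth /= !nth_code hi in_setU1.
have [->|ne] := eqVneq i j; first by rewrite eqxx.
have -> : (fv i == fv j) = false.
  by apply/negbTE/eqP => /(fv_inj hi hj) E; rewrite E eqxx in ne.
by [].
Qed.

Lemma code_all (B : {set petersen_vertex}) : all id (code B) = (B == setT).
Proof.
apply/allP/eqP => [H|->]; last by move=> x /mapP [i _ ->]; rewrite inE.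
apply/setP => x; rewrite inE; have [i hi <-] := fv_surj x.
by apply: H; apply/mapP; exists i; rewrite ?mem_iota.
Qed.

Lemma card_code (B : {set petersen_vertex}) : #|B| = count id (code B).
Proof.
set s := [seq fv i | i <- [seq i <- iota 0 10 | fv i \in B]].
have us : uniq s.
  rewrite map_inj_in_uniq ?filter_uniq ?iota_uniq // => i j.
  rewrite !mem_filter !mem_iota /= => /andP [_ hi] /andP [_ hj].
  exact: fv_inj.
have -> : #|B| = #|s|.
  apply: eq_card => x; have [i hi <-] := fv_surj x.
  apply/idP/mapP => [xB|[j]]; first by exists i; rewrite // mem_filter xB mem_iota.
  by rewrite mem_filter mem_iota => /andP [? /andP [_ hj]] /(fv_inj hi hj) ->.
by rewrite (card_uniqP us) size_map size_filter count_map.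
Qed.

Lemma reachN_sound n B F :
  reachN n (code B) (code F) -> hop_reach petersen_adj B F setT.
Proof.
elim: n B F => [|n IH] B F; rewrite ?reachN0 ?reachNS.
  by rewrite code_all => /eqP ->; constructor.
case/orP; first by rewrite code_all => /eqP ->; constructor.
case/hasP => v; rewrite mem_iota => /andP [_ hv] /and4P [H1 H2 H3 /hasP [w]].
rewrite mem_iota => /andP [_ hw] /andP [H4 H5].
rewrite !nth_code hv hw /= in H1 H2 H4.
apply: (@hop_force _ _ _ _ _ (fv v) (fv w)) => //.
  move=> u; have [k hk <-] := fv_surj u; rewrite adj_fv => ek.
  have := allP H3 k; rewrite mem_filter ek mem_iota hk => /(_ isT).
  by rewrite nth_code hk.
by apply: IH; rewrite !code_U.
Qed.

Lemma reachN_complete B F :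
  hop_reach petersen_adj B F setT -> forall n, #|~: B| <= n -> reachN n (code B) (code F).
Proof.
move Es: setT => S H; elim: H Es => {B F S} [B F|B F B' v w Hv HF Hn Hw _ IH] Es n Hn'.
  by subst; case: n {Hn'} => [|n]; rewrite ?reachN0 ?reachNS code_all eqxx.
case: n Hn' => [|n] Hn'.
  by move: Hn'; rewrite leqn0 cards_eq0 => /eqP/setP/(_ w); rewrite !inE (negbTE Hw).
have [i hi Ei] := fv_surj v; have [j hj Ej] := fv_surj w; subst v w.
rewrite reachNS; apply/orP; right; apply/hasP; exists i; first by rewrite mem_iota.
apply/and4P; split.
- by rewrite nth_code hi Hv.
- by rewrite nth_code hi (negbTE HF).
- apply/allP => u; rewrite mem_filter mem_iota => /andP [eu /andP [_ hu]].
  by rewrite nth_code hu; apply: Hn; rewrite adj_fv.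
apply/hasP; exists j; first by rewrite mem_iota.
apply/andP; split; first by rewrite nth_code hj (negbTE Hw).
rewrite -!code_U //.
apply: IH => //.
have : fv j \in ~: B by rewrite inE.
move=> wC; rewrite setCU -ltnS (leq_trans _ Hn') //.
rewrite (cardsD1 (fv j) (~: B)) wC add1n ltnS subset_leq_card //.
apply/subsetP => x; rewrite !inE => /andP [Hx1 Hx2]; by rewrite Hx1 Hx2.
Qed.

Fixpoint allbl (n : nat) : seq (seq bool) :=
  match n with 0 => [:: [::]]
  | n'.+1 => map (cons true) (allbl n') ++ map (cons false) (allbl n') end.

Lemma allbl_mem s : s \in allbl (size s).
Proof.
elim: s => [|x s IH] //=; rewrite mem_cat.
by case: x; rewrite (map_f _ IH) ?orbT.
Qed.

Lemma lower_check : all (fun b => if (count id b <= 5) then ~~ reachN 10 b (nseq 10 false) else true) (allbl 10).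
Proof. vm_compute. reflexivity. Qed.

Lemma upper_check : has (fun b => if (size b == 10) then if (count id b == 6) then reachN 10 b (nseq 10 false) else false else false) (allbl 10).
Proof. vm_compute. reflexivity. Qed.

Lemma code0 : code set0 = nseq 10 false.
Proof. by rewrite /code (eq_map (fun i => in_set0 (fv i))). Qed.

Theorem mainTheorem4 : hopping_number petersen_adj 6.
Proof.
split.
  case/hasP: upper_check => b _.
  case: ifP => // /eqP sb; case: ifP => // /eqP cb Hr.
  pose B := [set x | has (fun i => (fv i == x) && nth false b i) (iota 0 10)].
  have cB : code B = b.
    apply: (@eq_from_nth _ false); first by rewrite size_code sb.
    move=> i; rewrite size_code => hi; rewrite nth_code hi inE.
    apply/hasP/idP => [[j]|bi]; last by exists i; rewrite ?mem_iota ?eqxx.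
    rewrite mem_iota => /andP [_ hj] /andP [/eqP /(fv_inj hj hi) -> //].
  exists B; split; last by rewrite card_code cB.
  by apply: (@reachN_sound 10); rewrite cB code0.
move=> B HB; rewrite leqNgt; apply/negP => Hlt.
have := allP lower_check (code B); rewrite -(size_code B) allbl_mem => /(_ isT).
rewrite -card_code -ltnS Hlt -code0 => /negP; apply.
rewrite size_code; apply: (reachN_complete HB).
have := card_code [set: petersen_vertex].
have -> : code [set: petersen_vertex] = nseq 10 true.
  by rewrite /code (eq_map (fun i => in_setT (fv i))).
move=> E; apply: leq_trans (subset_leq_card (subsetT _)) _; by rewrite E.
Qed.
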